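(* For $n \ge 8$, let $\mu(n)$ be the minimum number of edges of a connected non-prime graph of order $n$. Then $\mu(n) \le n+1$ if $n$ is even, and $\mu(n) \le n+2$ if $n$ is odd.
   Context: Graphs are finite and simple. A prime labeling of a graph $G$ of order $n$ is a bijection $\alpha: V(G) \to \{1,2,\dots,n\}$ such that $\gcd(\alpha(u),\alpha(v)) = 1$ for every edge $uv \in E(G)$. $G$ is prime if it admits a prime labeling, and non-prime otherwise. *)

(* Defs.v *)
From mathcomp Require Import all_boot.
Set Implicit Arguments. Unset Strict Implicit. Unset Printing Implicit Defensive.

Definition simple_graph (n : nat) (e : rel 'I_n) : Prop :=
  symmetric e /\ irreflexive e.

Definition connected_graph (n : nat) (e : rel 'I_n) : Prop :=
  forall x y : 'I_n, connect e x y.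

(* number of edges: unordered pairs {u,v} (counted once via u < v) with uv an edge *)
Definition num_edges (n : nat) (e : rel 'I_n) : nat :=
  #|[set p : 'I_n * 'I_n | (p.1 < p.2)%N && e p.1 p.2]|.

Definition prime_labeling (n : nat) (e : rel 'I_n) (alpha : 'I_n -> nat) : Prop :=
  injective alpha /\
  (forall v, 1 <= alpha v <= n) /\
  (forall k, 1 <= k <= n -> exists v, alpha v = k) /\
  (forall u v, e u v -> coprime (alpha u) (alpha v)).

Definition prime_graph (n : nat) (e : rel 'I_n) : Prop :=
  exists alpha : 'I_n -> nat, prime_labeling e alpha.

(* Main.v *)
Require Import Defs.
From mathcomp Require Import all_boot.
From mathcomp Require Import zify.

Definition cls (T v : nat) := if v < 3*T then v %/ 3 else T + (v - 3*T) %/ 2.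

Lemma cls_same T u v : u < v -> cls T u = cls T v ->
  v = u.+1 \/ (v = u.+2 /\ u %% 3 = 0 /\ u < 3*T).
Proof. rewrite /cls; case: ifP; case: ifP; lia. Qed.

Lemma cls_bound n T v : (T = 2 /\ ~~odd n \/ T = 3 /\ odd n) -> 8 <= n -> v < n ->
  (cls T v).+1 < n./2.
Proof. move=> H Hn Hv; have := odd_double_half n. rewrite /cls; case: ifP; case: odd H; lia. Qed.

Definition ge (n T : nat) : rel 'I_n :=
  fun u v => (u != v) && [|| cls T u == cls T v, (u : nat).+1 == v | (v : nat).+1 == u].

Lemma ge_simple n T : simple_graph (ge n T).
Proof.
split.
- move=> u v; rewrite /ge eq_sym; congr andb.
  by rewrite (eq_sym (cls T u)); case: (_ == _) => //=; rewrite orbC.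
- by move=> u; rewrite /ge eqxx.
Qed.

Lemma ge_connected n T : connected_graph (ge n T).
Proof.
have csym : connect_sym (ge n T) by apply: sym_connect_sym; case: (ge_simple n T).
have H0 : forall x : 'I_n, forall y : 'I_n, (y : nat) = 0 -> connect (ge n T) y x.
  move=> [x Hx]; elim: x Hx => [|x IH] Hx y Hy.
    by have -> : y = Ordinal Hx by apply: val_inj.
  have Hx' : x < n by lia.
  apply: connect_trans (IH Hx' y Hy) _; apply: connect1.
  rewrite /ge /=; apply/andP; split; last by rewrite eqxx orbT.
  by apply/eqP => /(congr1 val) /=; lia.
move=> x y.
have n0 : 0 < n by apply: leq_ltn_trans (leq0n _) (ltn_ord x).
apply: connect_trans (_ : connect _ x (Ordinal n0)) _.
  by rewrite csym; apply: H0.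
by apply: H0.
Qed.

Lemma ge_edges n T : (T = 2 \/ T = 3) -> 3 * T <= n -> num_edges (ge n T) <= n - 1 + T.
Proof.
move=> HT HnT; rewrite /num_edges cardE.
set A := enum _.
pose f (p : 'I_n * 'I_n) : nat :=
  if (p.2 : nat) == (p.1 : nat).+1 then (p.1 : nat) else n - 1 + p.1 %/ 3.
have Hmem : forall p, p \in A -> (p.1 : nat) < p.2 /\
    ((p.2 : nat) = (p.1 : nat).+1 \/ ((p.2 : nat) = (p.1 : nat).+2 /\ p.1 %% 3 = 0 /\ p.1 < 3*T)).
  move=> [u v]; rewrite mem_enum inE /= /ge => /andP[Huv /andP[_ /or3P[/eqP H|/eqP H|/eqP H]]].
  - by split => //; apply: cls_same.
  - by split => //; left.
  - lia.
have Hu : uniq (map f A).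
  rewrite map_inj_in_uniq ?enum_uniq //.
  move=> [u v] [u' v'] /Hmem /= H1 /Hmem /= H2; rewrite /f /=.
  move: (ltn_ord u) (ltn_ord v) (ltn_ord u') (ltn_ord v') => ? ? ? ? Hf.
  have [E1 E2] : (u : nat) = u' /\ (v : nat) = v'.
    by move: Hf; case: eqP; case: eqP; lia.
  by congr pair; apply: val_inj.
have Hs : {subset map f A <= iota 0 (n - 1 + T)}.
  move=> x /mapP [[u v] /Hmem /= H ->]; rewrite mem_iota /f /=.
  move: (ltn_ord u) (ltn_ord v) => ? ?.
  by case: eqP; lia.
by have := uniq_leq_size Hu Hs; rewrite size_map size_iota.
Qed.

Lemma ge_nonprime n T : (T = 2 /\ ~~odd n \/ T = 3 /\ odd n) -> 8 <= n ->
  ~ prime_graph (ge n T).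
Proof.
move=> HT Hn [alpha [inj [rng [surj cop]]]].
have Hdh := odd_double_half n.
pose g j := if [pick v | alpha v == j.*2] is Some v then cls T v else 0.
have Hg : forall j, 1 <= j <= n./2 -> exists v, alpha v = j.*2 /\ g j = cls T v.
  move=> j Hj; rewrite /g; case: pickP => [v /eqP Hv|H]; first by exists v.
  have [|v Hv] := surj j.*2; first by lia.
  by move: (H v); rewrite Hv eqxx.
have Hu : uniq (map g (iota 1 n./2)).
  rewrite map_inj_in_uniq ?iota_uniq //.
  move=> i j; rewrite !mem_iota => Hi Hj Hgij.
  have [vi [Hai Hgi]] := Hg i ltac:(lia).
  have [vj [Haj Hgj]] := Hg j ltac:(lia).
  case: (eqVneq i j) => // Hne; exfalso.
  have Hv : vi != vj.
    apply/eqP => E; subst vj; have E2 : i = j by lia. by rewrite E2 eqxx in Hne.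
  have E : ge n T vi vj by rewrite /ge Hv -Hgi -Hgj Hgij eqxx.
  have := cop _ _ E; rewrite Hai Haj /coprime => /eqP H1.
  have : 2 %| gcdn i.*2 j.*2 by rewrite dvdn_gcd -!muln2 !dvdn_mull.
  by rewrite H1.
have Hs : {subset map g (iota 1 n./2) <= iota 0 (n./2 - 1)}.
  move=> x /mapP [j Hj ->]; move: Hj; rewrite mem_iota => Hj.
  have [vj [_ ->]] := Hg j ltac:(lia).
  have := @cls_bound n T vj HT Hn (ltn_ord vj).
  rewrite mem_iota; lia.
have := uniq_leq_size Hu Hs; rewrite size_map !size_iota; lia.
Qed.

(* mu(n) <= b  <=>  there is a connected non-prime graph of order n with at most b edges *)
Theorem theorem10p3 (n : nat) : 8 <= n ->
  exists e : rel 'I_n,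
    simple_graph e /\ connected_graph e /\ ~ prime_graph e /\
    num_edges e <= (if odd n then n + 2 else n + 1).
Proof.
move=> Hn.
exists (ge n (if odd n then 3 else 2)).
split; first exact: ge_simple.
split; first exact: ge_connected.
split.
  by apply: ge_nonprime => //; case: (odd n); [right|left].
have Hn9 : odd n -> 9 <= n.
  move=> Ho; case: (leqP 9 n) => // H.
  have E : n = 8 by lia.
  by rewrite E in Ho.
case Ho: (odd n).
- have := Hn9 Ho => H9.
  have := @ge_edges n 3 (or_intror erefl) ltac:(lia); lia.
- have := @ge_edges n 2 (or_introl erefl) ltac:(lia); lia.
Qed.
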